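(* Let $G$ be a graph in which every vertex belongs to a simplicial clique, and let $S$ be a degree-greedy stable set in $G$. Then every vertex of $S$ is simplicial, and $S$ contains exactly one vertex of each simplicial clique of $G$.
   Context: A vertex $v$ is simplicial if $N[v]$ is a clique; a clique is simplicial if it equals $N[v]$ for a simplicial vertex $v$. For a linear order $\sigma=(v_1,\dots,v_n)$ of $V(G)$, the $\sigma$-greedy stable set is obtained by scanning $v_1,\dots,v_n$ in order, starting with $S=\emptyset$, and adding $v_i$ to $S$ whenever $S\cup\{v_i\}$ is stable. A degree-greedy stable set is a $\sigma$-greedy stable set for some order $\sigma$ with $d_G(v_i)\le d_G(v_j)$ whenever $i<j$ (degrees taken in $G$). *)

(* Defs.v *)
(* A finite simple graph is a symmetric irreflexive relation
   e : rel T on a finite type T. *)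
From mathcomp Require Import all_boot.
Set Implicit Arguments. Unset Strict Implicit. Unset Printing Implicit Defensive.

Section Graph.
Variables (T : finType) (e : rel T).

Definition cnbhd (v : T) : {set T} := [set u | (u == v) || e v u].

Definition deg (v : T) : nat := #|[set u | e v u]|.

Definition is_clique (K : {set T}) : Prop :=
  forall x y, x \in K -> y \in K -> x != y -> e x y.

Definition stableb (S : {set T}) : bool :=
  [forall x in S, forall y in S, ~~ e x y].

Definition simplicial (v : T) : Prop := is_clique (cnbhd v).

Definition simplicial_clique (K : {set T}) : Prop :=
  exists2 v, simplicial v & K = cnbhd v.

Definition greedy_stable (sigma : seq T) : {set T} :=
  foldl (fun S v => if stableb (v |: S) then v |: S else S) set0 sigma.

Definition linear_order (sigma : seq T) : Prop := perm_eq sigma (enum T).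

Definition degree_order (sigma : seq T) : Prop :=
  linear_order sigma /\ pairwise (fun x y => deg x <= deg y) sigma.

Definition degree_greedy_stable (S : {set T}) : Prop :=
  exists2 sigma, degree_order sigma & S = greedy_stable sigma.

End Graph.

(* Main.v *)
Require Import Defs.
From mathcomp Require Import all_boot.
Set Implicit Arguments. Unset Strict Implicit. Unset Printing Implicit Defensive.

Section G.
Variables (T : finType) (e : rel T).
Hypothesis e_sym : symmetric e.
Hypothesis e_irr : irreflexive e.

Definition gstep (S : {set T}) (v : T) : {set T} :=
  if stableb e (v |: S) then v |: S else S.

Lemma greedyE (s : seq T) : greedy_stable e s = foldl gstep set0 s.
Proof. by []. Qed.

Lemma stableP (S : {set T}) :
  reflect (forall x y, x \in S -> y \in S -> ~~ e x y) (stableb e S).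
Proof.
apply: (iffP forallP) => [H x y xS yS | H x].
  by have /implyP/(_ xS)/forallP/(_ y)/implyP/(_ yS) := H x.
by apply/implyP => xS; apply/forallP => y; apply/implyP => yS; exact: H.
Qed.

Lemma fold_sub (s : seq T) (S0 : {set T}) : S0 \subset foldl gstep S0 s.
Proof.
elim: s S0 => [|x s IH] S0 /=; first exact: subxx.
apply: subset_trans (IH _); rewrite /gstep; case: ifP => _ //; exact: subsetUr.
Qed.

Lemma fold_in (s : seq T) (S0 : {set T}) (y : T) : y \in foldl gstep S0 s -> (y \in S0) || (y \in s).
Proof.
elim: s S0 => [|x s IH] S0 /=; first by move=> ->.
move/IH; rewrite /gstep in_cons; case: ifP => _; rewrite ?in_setU1.
  by case/orP => [/orP[]|] H; rewrite H ?orbT.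
by case/orP => H; rewrite H ?orbT.
Qed.

Lemma fold_stable (s : seq T) (S0 : {set T}) : stableb e S0 -> stableb e (foldl gstep S0 s).
Proof.
elim: s S0 => [|x s IH] S0 //= H; apply: IH; rewrite /gstep; by case: ifP.
Qed.

Lemma step_dom (S0 : {set T}) (x : T) : stableb e S0 ->
  (x \in gstep S0 x) \/ exists2 u, u \in gstep S0 x & e x u.
Proof.
move=> /stableP st; rewrite /gstep; case: ifP => [_|/negbT/stableP ns].
  by left; rewrite setU11.
right; case: (pickP [pred u | (u \in S0) && e x u]) => [u /andP[uS exu]|none].
  by exists u.
have nex : ~ exists2 u, u \in S0 & e x u.
  by case=> u uS exu; move: (none u); rewrite /= uS exu.
exfalso; apply: ns => a b.
rewrite !in_setU1 => /orP[/eqP->|aS] /orP[/eqP->|bS].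
- by rewrite e_irr.
- by apply/negP => exb; apply: nex; exists b.
- by apply/negP => eax; apply: nex; exists a; rewrite // e_sym.
- exact: st.
Qed.

Lemma fold_dom (s : seq T) (S0 : {set T}) (x : T) : stableb e S0 -> x \in s ->
  (x \in foldl gstep S0 s) \/ exists2 u, u \in foldl gstep S0 s & e x u.
Proof.
elim: s S0 => [|y s IH] S0 //= st; rewrite in_cons => /orP[/eqP->|xs].
  case: (step_dom y st) => [H|[u uS eu]].
    by left; apply: (subsetP (fold_sub _ _)).
  by right; exists u => //; apply: (subsetP (fold_sub _ _)).
apply: IH => //; rewrite /gstep; by case: ifP.
Qed.

Lemma card_cnbhd v : #|cnbhd e v| = (deg e v).+1.
Proof.
rewrite /deg (_ : cnbhd e v = v |: [set u | e v u]); last first.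
  by apply/setP => u; rewrite !inE.
by rewrite cardsU1 inE e_irr.
Qed.

End G.

Theorem lemma9 (T : finType) (e : rel T)
  (e_sym : symmetric e) (e_irr : irreflexive e)
  (hcover : forall x : T, exists2 K : {set T}, simplicial_clique e K & x \in K)
  (S : {set T}) (hS : degree_greedy_stable e S) :
  (forall v, v \in S -> simplicial e v) /\
  (forall K : {set T}, simplicial_clique e K -> #|S :&: K| = 1).
Proof.
case: hS => sigma [lin pw] ->.
have memsig x : x \in sigma by rewrite (perm_mem lin) mem_enum.
have st0 : stableb e (set0 : {set T}) by apply/stableP => x y; rewrite inE.
have stS := fold_stable sigma st0.
rewrite greedyE.
set G := foldl (gstep e) set0 sigma in stS *.
have uq : uniq sigma by rewrite (perm_uniq lin) enum_uniq.
split.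
  move=> v vS; case: (hcover v) => _ [w sw ->] vK.
  have sub : cnbhd e w \subset cnbhd e v.
    apply/subsetP => x xw; rewrite inE; case: (eqVneq x v) => //= xv.
    by apply: sw => //; rewrite eq_sym.
  have := subset_leq_card sub; rewrite !card_cnbhd // ltnS leq_eqVlt.
  case/orP => [/eqP eqd | ltd].
    have : cnbhd e w == cnbhd e v.
      rewrite eqEcard sub /=. rewrite !card_cnbhd //. rewrite eqd. by [].
    by move/eqP => E; rewrite /simplicial -E.
  exfalso.
  have vw : v != w by apply: contraTneq ltd => ->; rewrite ltnn.
  have evw : e w v by move: vK; rewrite inE (negbTE vw).
  have [p [q sig]] : exists p q, sigma = p ++ w :: q.
    by case/splitPr: (memsig w) => p q; exists p, q.
  have vq : v \in q.
    move: (memsig v); rewrite sig mem_cat in_cons (negbTE vw) /=.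
    case/orP => // vp; move: pw; rewrite sig pairwise_cat => /and3P[/allrelP H _ _].
    by move: (H v w vp (mem_head _ _)); rewrite leqNgt ltd.
  have vnotp : v \notin rcons p w.
    move: uq; rewrite sig cat_uniq => /and3P[_ /hasPn H _].
    rewrite mem_rcons in_cons (negbTE vw) /=.
    by apply: H; rewrite in_cons vq orbT.
  have GE : G = foldl (gstep e) (foldl (gstep e) set0 (rcons p w)) q.
    by rewrite /G sig -cat1s catA cats1 foldl_cat.
  set S1 := foldl (gstep e) set0 (rcons p w) in GE.
  have S1G : S1 \subset G by rewrite GE; exact: fold_sub.
  have vS1 : v \notin S1.
    by apply/negP => /fold_in; rewrite inE /= (negbTE vnotp).
  have st1 : stableb e S1 := fold_stable (rcons p w) st0.
  move/stableP: stS => stS.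
  case: (fold_dom e_sym e_irr st0 (x := w) (s := rcons p w) (ltac:(by rewrite mem_rcons mem_head))) => [wS1 | [u uS1 ewu]].
    by move: (stS w v (subsetP S1G _ wS1) vS); rewrite evw.
  have uv : u != v by apply: contraNneq vS1 => <-.
  have euv : e u v.
    apply: sw => //; rewrite inE ?ewu ?orbT //.
  by move: (stS u v (subsetP S1G _ uS1) vS); rewrite euv.
move=> K [w sw ->].
have [s sG sK] : exists2 s, s \in G & s \in cnbhd e w.
  case: (fold_dom e_sym e_irr st0 (memsig w)) => [wG|[u uG ewu]].
    by exists w => //; rewrite inE eqxx.
  by exists u => //; rewrite inE ewu orbT.
have -> : G :&: cnbhd e w = [set s].
  apply/setP => y; rewrite in_set1 inE; apply/idP/eqP => [/andP[yG yK]|->].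
    apply/eqP; apply: contraT => ys.
    by move/stableP: stS => /(_ y s yG sG); rewrite (sw y s).
  by rewrite sG.
exact: cards1.
Qed.
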